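(* Let $\gamma\ge2$. For every $G\in\mathcal S(\mathbb R)$, $$\lim_{n\to\infty}\frac{[\Theta(n)]^2}{n^2}\Big\{\sum_{x,y\in\mathbb Z}[G(\tfrac yn)-G(\tfrac xn)]^4p^2(y-x)+\sum_{x\in\mathbb Z}\Big[\sum_{y\in\mathbb Z}p(y-x)[G(\tfrac yn)-G(\tfrac xn)]^2\Big]^2\Big\}=0.$$
   Context: Let $p(0)=0$, $p(x)=c_\gamma|x|^{-\gamma-1}$ for $x\ne0$, with $c_\gamma$ the constant making $\sum_xp(x)=1$. $\Theta(n)=n^2$ if $\gamma>2$ and $\Theta(n)=n^2/\log n$ if $\gamma=2$. $\mathcal S(\mathbb R)$ is the Schwartz space. *)

(* Defs.v *)
From Stdlib Require Import Reals ZArith.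
From Coquelicot Require Import Coquelicot.
Open Scope R_scope.

(* Sum over Z of f : Z -> R, as sum over x >= 0 plus sum over x < 0.
   (Used only for nonnegative summands, where this is the unordered sum
   whenever it is finite.) *)
Definition zsum (f : Z -> R) : R :=
  Series (fun k : nat => f (Z.of_nat k)) + Series (fun k : nat => f (- Z.of_nat (S k))%Z).

Definition q_kernel (gamma : R) (x : Z) : R :=
  if Z.eq_dec x 0 then 0 else Rpower (Rabs (IZR x)) (- gamma - 1).

Definition c_gamma (gamma : R) : R := / zsum (q_kernel gamma).

Definition p_kernel (gamma : R) (x : Z) : R := c_gamma gamma * q_kernel gamma x.

Definition Theta (gamma : R) (n : nat) : R :=
  if Rgt_dec gamma 2 then INR n ^ 2 else INR n ^ 2 / ln (INR n).

Definition schwartz (G : R -> R) : Prop :=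
  (forall (m : nat) (x : R), ex_derive_n G m x) /\
  (forall k m : nat, exists C : R, forall x : R, Rabs (x ^ k * Derive_n G m x) <= C).

Definition A6_expr (gamma : R) (G : R -> R) (n : nat) : R :=
  let N := INR n in
  (Theta gamma n) ^ 2 / N ^ 2 *
  ( zsum (fun x => zsum (fun y =>
        (G (IZR y / N) - G (IZR x / N)) ^ 4 * (p_kernel gamma (y - x)) ^ 2))
  + zsum (fun x => (zsum (fun y =>
        p_kernel gamma (y - x) * (G (IZR y / N) - G (IZR x / N)) ^ 2)) ^ 2) ).

(* Main.v *)
Require Import Defs.
From Stdlib Require Import Reals ZArith Lra Lia.
From Coquelicot Require Import Coquelicot.
Open Scope R_scope.

Lemma sum_Sn_R (a : nat -> R) n : sum_n a (S n) = sum_n a n + a (S n).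
Proof. rewrite sum_Sn. reflexivity. Qed.

Lemma sum_n_Rle (a b : nat -> R) N : (forall k, a k <= b k) -> sum_n a N <= sum_n b N.
Proof.
  intros H; induction N.
  - rewrite !sum_O; auto.
  - rewrite !sum_Sn; unfold plus; simpl. specialize (H (S N)); lra.
Qed.

Lemma sum_n_nonneg (a : nat -> R) N : (forall k, 0 <= a k) -> 0 <= sum_n a N.
Proof.
  intros H; induction N.
  - rewrite sum_O; auto.
  - rewrite sum_Sn; unfold plus; simpl. specialize (H (S N)); lra.
Qed.

Lemma sum_n_Rscal (a : nat -> R) B N : sum_n (fun k => B * a k) N = B * sum_n a N.
Proof.
  induction N.
  - rewrite !sum_O; auto.
  - rewrite !sum_Sn; unfold plus; simpl. rewrite IHN; ring.
Qed.

Lemma half_series (a : nat -> R) M : (forall k, 0 <= a k) -> (forall N, sum_n a N <= M) ->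
  0 <= Series a <= M.
Proof.
  intros H0 HM.
  assert (Hinc : forall n, sum_n a n <= sum_n a (S n)).
  { intros n; rewrite sum_Sn; unfold plus; simpl; specialize (H0 (S n)); lra. }
  destruct (ex_finite_lim_seq_incr _ M Hinc HM) as [l Hl].
  unfold Series. rewrite (is_lim_seq_unique _ _ Hl). simpl.
  split.
  - assert (Hc : is_lim_seq (fun _ : nat => 0) 0) by apply is_lim_seq_const.
    pose proof (is_lim_seq_le _ _ _ _ (fun n => sum_n_nonneg a n H0) Hc Hl). simpl in H; auto.
  - assert (Hc : is_lim_seq (fun _ : nat => M) M) by apply is_lim_seq_const.
    pose proof (is_lim_seq_le _ _ _ _ HM Hl Hc). simpl in H; auto.
Qed.

Lemma absnat_eq (z : Z) (m : nat) : Z.abs z = Z.of_nat m -> Z.abs_nat z = m.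
Proof. intros H. apply Nat2Z.inj. rewrite Nat2Z.inj_abs_nat. exact H. Qed.

Definition twoF (f : nat -> R) (z : Z) : R :=
  if Z_le_dec 0 z then f (Z.to_nat z) else 2 * f 0%nat - f (Z.to_nat (- z)).

Section Pot.
Variables (u f : nat -> R) (D : R).
Hypothesis Hu0 : forall k, 0 <= u k.
Hypothesis Hudec : forall k, u (S k) <= u k.
Hypothesis Hstep : forall k, u k <= f (S k) - f k.
Hypothesis HD : forall k, f k <= f 0%nat + D.

Lemma f_ge0 k : f 0%nat <= f k.
Proof. induction k; [lra|]. specialize (Hstep k); specialize (Hu0 k); lra. Qed.

Lemma twoF_range z : f 0%nat - D <= twoF f z <= f 0%nat + D.
Proof.
  unfold twoF; destruct (Z_le_dec 0 z).
  - split; [|apply HD]. pose proof (f_ge0 (Z.to_nat z)). pose proof (HD 0%nat). lra.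
  - pose proof (f_ge0 (Z.to_nat (-z))). pose proof (HD (Z.to_nat (-z))). lra.
Qed.

Lemma twoF_step z : u (Z.abs_nat z) <= twoF f (z + 1) - twoF f z.
Proof.
  unfold twoF; destruct (Z_le_dec 0 z), (Z_le_dec 0 (z+1)); try lia.
  - replace (Z.to_nat (z+1)) with (S (Z.to_nat z)) by lia.
    replace (Z.abs_nat z) with (Z.to_nat z) by (symmetry; apply absnat_eq; lia). apply Hstep.
  - assert (z = -1)%Z by lia. subst. simpl.
    specialize (Hstep 0%nat). specialize (Hudec 0%nat). simpl in *. change (Pos.to_nat 1) with 1%nat. change (PosDef.Pos.to_nat 1) with 1%nat. lra.
  - replace (Z.to_nat (-z)) with (S (Z.to_nat (- (z+1)))) by lia.
    replace (Z.abs_nat z) with (S (Z.to_nat (- (z+1)))) by (symmetry; apply absnat_eq; lia).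
    specialize (Hstep (Z.to_nat (- (z+1)))). specialize (Hudec (Z.to_nat (- (z+1)))). lra.
Qed.

Lemma window1 x N : sum_n (fun k => u (Z.abs_nat (Z.of_nat k - x))) N
   <= twoF f (Z.of_nat (S N) - x) - twoF f (- x).
Proof.
  induction N.
  - rewrite sum_O. pose proof (twoF_step (Z.of_nat 0 - x)).
    replace (Z.of_nat 0 - x + 1)%Z with (Z.of_nat 1 - x)%Z in H by lia.
    replace (Z.of_nat 0 - x)%Z with (- x)%Z in H by lia. simpl in *. 
    replace (0 - x)%Z with (-x)%Z by lia. exact H.
  - rewrite sum_Sn_R.
    pose proof (twoF_step (Z.of_nat (S N) - x)).
    replace (Z.of_nat (S N) - x + 1)%Z with (Z.of_nat (S (S N)) - x)%Z in H by lia.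
    lra.
Qed.

Lemma window2 x N : sum_n (fun k => u (Z.abs_nat (- Z.of_nat (S k) - x))) N
   <= twoF f (- x) - twoF f (- Z.of_nat (S N) - x).
Proof.
  induction N.
  - rewrite sum_O. pose proof (twoF_step (- Z.of_nat 1 - x)).
    replace (- Z.of_nat 1 - x + 1)%Z with (- x)%Z in H by lia. exact H.
  - rewrite sum_Sn_R.
    pose proof (twoF_step (- Z.of_nat (S (S N)) - x)).
    replace (- Z.of_nat (S (S N)) - x + 1)%Z with (- Z.of_nat (S N) - x)%Z in H by lia.
    lra.
Qed.
End Pot.

Lemma zsum_bound (w : Z -> R) (u f : nat -> R) (D B : R) (x : Z) :
  (forall k, 0 <= u k) -> (forall k, u (S k) <= u k) -> (forall k, u k <= f (S k) - f k) ->
  (forall k, f k <= f 0%nat + D) -> 0 <= B ->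
  (forall y, 0 <= w y /\ w y <= B * u (Z.abs_nat (y - x))) ->
  0 <= zsum w /\ zsum w <= B * (2 * D).
Proof.
  intros Hu0 Hudec Hstep HD HB Hw.
  pose proof (twoF_range u f D Hu0 Hstep HD (- x)) as Hr.
  assert (H1 : 0 <= Series (fun k : nat => w (Z.of_nat k)) <= B * (f 0%nat + D - twoF f (-x))).
  { apply half_series. intros; apply Hw.
    intros N. eapply Rle_trans.
    apply (sum_n_Rle _ (fun k => B * u (Z.abs_nat (Z.of_nat k - x)))). intros; apply Hw.
    rewrite sum_n_Rscal. apply Rmult_le_compat_l; auto.
    eapply Rle_trans. apply window1; auto.
    pose proof (twoF_range u f D Hu0 Hstep HD (Z.of_nat (S N) - x)). lra. }
  assert (H2 : 0 <= Series (fun k : nat => w (- Z.of_nat (S k))%Z) <= B * (twoF f (-x) - (f 0%nat - D))).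
  { apply half_series. intros; apply Hw.
    intros N. eapply Rle_trans.
    apply (sum_n_Rle _ (fun k => B * u (Z.abs_nat (- Z.of_nat (S k) - x)))). intros; apply Hw.
    rewrite sum_n_Rscal. apply Rmult_le_compat_l; auto.
    eapply Rle_trans. apply window2; auto.
    pose proof (twoF_range u f D Hu0 Hstep HD (- Z.of_nat (S N) - x)). lra. }
  unfold zsum. split; [lra|].
  replace (B * (2 * D)) with (B * (f 0%nat + D - twoF f (- x)) + B * (twoF f (- x) - (f 0%nat - D))) by ring.
  lra.
Qed.

Lemma env (G : R -> R) : schwartz G -> exists K, 0 < K /\
  (forall t, (1 + Rabs t) * Rabs (G t) <= K) /\ (forall t, ex_derive G t) /\
  (forall t, (1 + Rabs t) * Rabs (Derive G t) <= K).
Proof.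
  intros [Hd Hb].
  destruct (Hb 0%nat 0%nat) as [C0 H0]. destruct (Hb 1%nat 0%nat) as [C1 H1].
  destruct (Hb 0%nat 1%nat) as [C2 H2]. destruct (Hb 1%nat 1%nat) as [C3 H3].
  assert (P0 : 0 <= C0) by (eapply Rle_trans; [apply Rabs_pos| apply (H0 0)]).
  assert (P1 : 0 <= C1) by (eapply Rle_trans; [apply Rabs_pos| apply (H1 0)]).
  assert (P2 : 0 <= C2) by (eapply Rle_trans; [apply Rabs_pos| apply (H2 0)]).
  assert (P3 : 0 <= C3) by (eapply Rle_trans; [apply Rabs_pos| apply (H3 0)]).
  exists (C0 + C1 + C2 + C3 + 1). repeat split.
  - lra.
  - intros t. specialize (H0 t); specialize (H1 t). simpl in H0, H1.
    rewrite Rmult_1_l in H0. rewrite Rmult_1_r, Rabs_mult in H1. lra.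
  - intros t. exact (Hd 1%nat t).
  - intros t. specialize (H2 t); specialize (H3 t). simpl in H2, H3.
    rewrite Rmult_1_l in H2. rewrite Rmult_1_r, Rabs_mult in H3. change (Derive (fun x => G x) t) with (Derive G t) in *. lra.
Qed.

Section DG.
Variables (G : R -> R) (K : R).
Hypothesis HK : 0 < K.
Hypothesis HG : forall t, (1 + Rabs t) * Rabs (G t) <= K.
Hypothesis Hex : forall t, ex_derive G t.
Hypothesis HG' : forall t, (1 + Rabs t) * Rabs (Derive G t) <= K.

Lemma G_bd t : Rabs (G t) <= K.
Proof. specialize (HG t). pose proof (Rabs_pos t). pose proof (Rabs_pos (G t)). nra. Qed.

Lemma dG_sup s t : Rabs (G t - G s) <= 2 * K.
Proof.
  pose proof (G_bd s); pose proof (G_bd t).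
  eapply Rle_trans. apply Rabs_triang. rewrite Rabs_Ropp. lra.
Qed.

Lemma dG_env s t : (1 + Rabs s) * Rabs (G t - G s) <= 3 * K * Rabs (t - s).
Proof.
  destruct (Rle_lt_dec (Rabs (t - s)) 1) as [Hle|Hlt].
  - destruct (MVT_gen G s t (Derive G)) as [c [Hc Heq]].
    + intros x _. apply Derive_correct, Hex.
    + intros x _. apply continuity_pt_filterlim. apply (ex_derive_continuous (K:=R_AbsRing) (V:=R_NormedModule)), Hex.
    + rewrite Heq, Rabs_mult.
      assert (Hcs : Rabs (c - s) <= Rabs (t - s)).
      { unfold Rmin, Rmax in Hc. destruct (Rle_dec s t);
        unfold Rabs; repeat destruct Rcase_abs; lra. }
      assert (H1 : 1 + Rabs s <= 2 * (1 + Rabs c)).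
      { pose proof (Rabs_triang_inv s c). pose proof (Rabs_pos c). 
        assert (Rabs (s - c) = Rabs (c - s)) by (rewrite <- Rabs_Ropp; f_equal; ring).
        lra. }
      specialize (HG' c).
      pose proof (Rabs_pos (Derive G c)). pose proof (Rabs_pos (t - s)). pose proof (Rabs_pos s).
      pose proof (Rabs_pos c).
      assert (HA : (1 + Rabs s) * Rabs (Derive G c) <= 2 * K) by nra.
      nra.
  - pose proof (HG t). pose proof (HG s).
    assert (H1 : 1 + Rabs s <= (1 + Rabs t) * (2 * Rabs (t - s))).
    { pose proof (Rabs_triang_inv t s). pose proof (Rabs_pos t). 
      assert (Rabs (t - s) = Rabs (s - t)) by (rewrite <- Rabs_Ropp; f_equal; ring).
      pose proof (Rabs_triang_inv s t). nra. }
    assert (Hd : Rabs (G t - G s) <= Rabs (G t) + Rabs (G s)).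
    { eapply Rle_trans. apply Rabs_triang. rewrite Rabs_Ropp. lra. }
    pose proof (Rabs_pos (G t)). pose proof (Rabs_pos (G s)). pose proof (Rabs_pos s).
    pose proof (Rabs_pos t).
    assert (HA : (1 + Rabs s) * Rabs (G t) <= 2 * K * Rabs (t - s)) by nra.
    assert (HB : (1 + Rabs s) * Rabs (G s) <= K * Rabs (t - s)) by nra.
    nra.
Qed.
End DG.

Lemma ineq1 d p c K e N r : 0 <= d -> d <= 3*K*e*r/N -> 0 <= p -> p <= c/r^3 -> 1 <= r ->
  0 <= e <= 1 -> 0 < N -> 0 <= K -> 0 <= c ->
  d^4 * p^2 <= 324*c^2*K^4*e^2/N^4 * /(1+r)^2.
Proof.
  intros Hd Hd2 Hp Hp2 Hr He HN HK Hc.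
  assert (H1 : d^4 <= (3*K*e*r/N)^4) by (apply pow_incr; lra).
  assert (H2 : p^2 <= (c/r^3)^2) by (apply pow_incr; lra).
  assert (H3 : d^4 * p^2 <= (3*K*e*r/N)^4 * (c/r^3)^2).
  { apply Rmult_le_compat; auto; apply pow_le; lra. }
  eapply Rle_trans; [exact H3|].
  replace ((3*K*e*r/N)^4 * (c/r^3)^2) with ((c^2*K^4*e^2/N^4) * (81*e^2/r^2)) by (field; lra).
  replace (324*c^2*K^4*e^2/N^4 * /(1+r)^2) with ((c^2*K^4*e^2/N^4) * (324/(1+r)^2)) by (field; lra).
  apply Rmult_le_compat_l.
  - unfold Rdiv. apply Rmult_le_pos. 
    + apply Rmult_le_pos; [apply Rmult_le_pos|]; apply pow_le; lra.
    + apply Rlt_le, Rinv_0_lt_compat, pow_lt; lra.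
  - assert (e^2 <= 1) by nra.
    apply (Rmult_le_reg_r (r^2 * (1+r)^2)). apply Rmult_lt_0_compat; apply pow_lt; lra.
    replace (81 * e ^ 2 / r ^ 2 * (r ^ 2 * (1 + r) ^ 2)) with (81 * e^2 * (1+r)^2) by (field; lra).
    replace (324 / (1 + r) ^ 2 * (r ^ 2 * (1 + r) ^ 2)) with (324 * r^2) by (field; lra).
    nra.
Qed.

Lemma ineq2 d p c K e N r : 0 <= d -> d <= 3*K*e*r/N -> d <= 2*K -> 0 <= p -> p <= c/r^3 -> 1 <= r ->
  0 <= e <= 1 -> 0 < N -> 0 <= K -> 0 <= c ->
  p * d^2 <= 30*c*K^2*e/N * /((1+r)*(N+r)).
Proof.
  intros Hd Hd2 Hd3 Hp Hp2 Hr He HN HK Hc.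
  assert (A1 : d^2 * N <= 9*K^2*e*r^2/N).
  { assert (d^2 <= (3*K*e*r/N)^2) by (apply pow_incr; lra).
    assert ((3*K*e*r/N)^2 * N = 9*K^2*e^2*r^2/N) by (field; lra).
    assert (9*K^2*e^2*r^2/N <= 9*K^2*e*r^2/N).
    { unfold Rdiv. apply Rmult_le_compat_r. apply Rlt_le, Rinv_0_lt_compat; lra.
      assert (0 <= K^2*r^2) by nra. assert (e^2 <= e) by nra.
      replace (9*K^2*e^2*r^2) with ((9*(K^2*r^2))*e^2) by ring.
      replace (9*K^2*e*r^2) with ((9*(K^2*r^2))*e) by ring.
      apply Rmult_le_compat_l; lra. }
    nra. }
  assert (A2 : d^2 * r <= 6*K^2*e*r^2/N).
  { assert (d^2 <= 2*K*(3*K*e*r/N)).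
    { replace (d^2) with (d*d) by ring. apply Rmult_le_compat; lra. }
    assert (2*K*(3*K*e*r/N) * r = 6*K^2*e*r^2/N) by (field; lra). nra. }
  assert (A : d^2 * (N + r) <= 15*K^2*e*r^2/N).
  { assert (6*K^2*e*r^2/N <= 6*K^2*e*r^2/N) by lra.
    replace (15*K^2*e*r^2/N) with (9*K^2*e*r^2/N + 6*K^2*e*r^2/N) by (field; lra). nra. }
  assert (B : p * d^2 <= c/r^3 * d^2) by (apply Rmult_le_compat_r; [apply pow_le|]; lra).
  eapply Rle_trans; [exact B|].
  apply (Rmult_le_reg_r (r^3 * (N + r) * (1 + r) * N)). 
  { assert (0 < r^3) by (apply pow_lt; lra). repeat apply Rmult_lt_0_compat; lra. }
  replace (c / r ^ 3 * d ^ 2 * (r ^ 3 * (N + r) * (1 + r) * N)) with (c * (1+r) * N * (d^2 * (N + r))) by (field; lra).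
  replace (30 * c * K ^ 2 * e / N * / ((1 + r) * (N + r)) * (r ^ 3 * (N + r) * (1 + r) * N))
    with (30 * c * K^2 * e * r^3) by (field; lra).
  assert (0 <= c * (1+r) * N) by (apply Rmult_le_pos; [apply Rmult_le_pos|]; lra).
  assert (c * (1+r) * N * (d^2 * (N + r)) <= c * (1+r) * N * (15*K^2*e*r^2/N)) by (apply Rmult_le_compat_l; auto).
  eapply Rle_trans; [exact H0|].
  replace (c * (1 + r) * N * (15 * K ^ 2 * e * r ^ 2 / N)) with (15 * c * K^2 * e * r^2 * (1 + r)) by (field; lra).
  assert (0 <= c * K^2 * e * r^2) by (repeat apply Rmult_le_pos; try lra; apply pow2_ge_0).
  nra.
Qed.

Lemma ln_le_lin y : 0 < y -> ln y <= y - 1.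
Proof.
  intros Hy. pose proof (exp_ineq1_le (y - 1)).
  rewrite <- (ln_exp (y - 1)). apply ln_le; auto. lra.
Qed.

Lemma ln_diff_lo a b : 0 < a -> 0 < b -> 1 - b / a <= ln a - ln b.
Proof.
  intros Ha Hb. pose proof (ln_le_lin (b / a)).
  rewrite ln_div in H by auto. assert (0 < b / a) by (apply Rdiv_lt_0_compat; auto). lra.
Qed.

Lemma ln_diff_hi a b : 0 < a -> 0 < b -> ln a - ln b <= a / b - 1.
Proof.
  intros Ha Hb. pose proof (ln_le_lin (a / b)).
  rewrite ln_div in H by auto. assert (0 < a / b) by (apply Rdiv_lt_0_compat; auto). lra.
Qed.

Definition u1 (k : nat) : R := / (1 + INR k)^2.
Definition f1 (k : nat) : R := - / (INR k + /2).
Lemma u1_pos k : 0 <= u1 k.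
Proof. unfold u1. pose proof (pos_INR k). apply Rlt_le, Rinv_0_lt_compat, pow_lt; lra. Qed.
Lemma u1_dec k : u1 (S k) <= u1 k.
Proof. unfold u1. rewrite S_INR. pose proof (pos_INR k).
  apply Rinv_le_contravar. apply pow_lt; lra. apply pow_incr; lra. Qed.
Lemma u1_step k : u1 k <= f1 (S k) - f1 k.
Proof. unfold u1, f1. rewrite S_INR. pose proof (pos_INR k).
  replace (- / (INR k + 1 + / 2) - - / (INR k + / 2)) with (/ ((INR k + /2) * (INR k + 1 + /2))) by (field; lra).
  apply Rinv_le_contravar. apply Rmult_lt_0_compat; lra. nra. Qed.
Lemma f1_D k : f1 k <= f1 0%nat + 2.
Proof. unfold f1. simpl. pose proof (pos_INR k).
  assert (0 < / (INR k + /2)) by (apply Rinv_0_lt_compat; lra).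
  replace (/ (0 + /2)) with 2 by (field; lra). lra. Qed.

Definition u2 (N : R) (k : nat) : R := / ((1 + INR k) * (N + INR k)).
Definition f2 (N : R) (k : nat) : R := 4 / N * (ln (INR k + 1) - ln (N + INR k)).
Section P2.
Variable N : R.
Hypothesis HN : 4 <= N.
Lemma u2_pos k : 0 <= u2 N k.
Proof. unfold u2. pose proof (pos_INR k). apply Rlt_le, Rinv_0_lt_compat, Rmult_lt_0_compat; lra. Qed.
Lemma u2_dec k : u2 N (S k) <= u2 N k.
Proof. unfold u2. rewrite S_INR. pose proof (pos_INR k).
  apply Rinv_le_contravar. apply Rmult_lt_0_compat; lra. apply Rmult_le_compat; lra. Qed.
Lemma u2_step k : u2 N k <= f2 N (S k) - f2 N k.
Proof. unfold u2, f2. rewrite S_INR. pose proof (pos_INR k).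
  pose proof (ln_diff_lo (INR k + 1 + 1) (INR k + 1)).
  pose proof (ln_diff_hi (N + (INR k + 1)) (N + INR k)).
  assert (E : 4 / N * (ln (INR k + 1 + 1) - ln (N + (INR k + 1))) - 4 / N * (ln (INR k + 1) - ln (N + INR k))
     = 4 / N * ((ln (INR k + 1 + 1) - ln (INR k + 1)) - (ln (N + (INR k + 1)) - ln (N + INR k)))) by ring.
  rewrite E; clear E.
  eapply Rle_trans with (4 / N * ((1 - (INR k + 1) / (INR k + 1 + 1)) - ((N + (INR k + 1)) / (N + INR k) - 1))).
  2:{ apply Rmult_le_compat_l. apply Rlt_le, Rdiv_lt_0_compat; lra. 
      assert (1 - (INR k + 1) / (INR k + 1 + 1) <= ln (INR k + 1 + 1) - ln (INR k + 1)) by (apply H0; lra).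
      assert (ln (N + (INR k + 1)) - ln (N + INR k) <= (N + (INR k + 1)) / (N + INR k) - 1) by (apply H1; lra).
      lra. }
  set (x := INR k) in *.
  replace (4 / N * (1 - (x + 1) / (x + 1 + 1) - ((N + (x + 1)) / (N + x) - 1)))
     with (4 * (N - 2) / (N * (x + 2) * (N + x))) by (field; repeat split; lra).
  unfold Rdiv. rewrite <- (Rmult_1_l (/ ((1 + x) * (N + x)))).
  apply (Rmult_le_reg_r ((1 + x) * (N + x) * (N * (x + 2)))).
  { repeat apply Rmult_lt_0_compat; lra. }
  replace (1 * / ((1 + x) * (N + x)) * ((1 + x) * (N + x) * (N * (x + 2)))) with (N * (x + 2)) by (field; lra).
  replace (4 * (N - 2) * / (N * (x + 2) * (N + x)) * ((1 + x) * (N + x) * (N * (x + 2))))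
    with (4 * (N - 2) * (1 + x)) by (field; repeat split; lra).
  nra.
Qed.
Lemma f2_D k : f2 N k <= f2 N 0%nat + 4 / N * ln N.
Proof. unfold f2. simpl. pose proof (pos_INR k).
  replace (0 + 1) with 1 by ring. rewrite ln_1. replace (N + 0) with N by ring.
  assert (ln (INR k + 1) <= ln (N + INR k)) by (apply ln_le; lra).
  assert (0 < 4 / N) by (apply Rdiv_lt_0_compat; lra).
  assert (4 / N * (ln (INR k + 1) - ln (N + INR k)) <= 0) by nra. nra. Qed.
End P2.

Definition u3 (N : R) (k : nat) : R := / (N + INR k)^2.
Definition f3 (N : R) (k : nat) : R := - / (N + INR k - /2).
Section P3.
Variable N : R.
Hypothesis HN : 1 <= N.
Lemma u3_pos k : 0 <= u3 N k.
Proof. unfold u3. pose proof (pos_INR k). apply Rlt_le, Rinv_0_lt_compat, pow_lt; lra. Qed.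
Lemma u3_dec k : u3 N (S k) <= u3 N k.
Proof. unfold u3. rewrite S_INR. pose proof (pos_INR k).
  apply Rinv_le_contravar. apply pow_lt; lra. apply pow_incr; lra. Qed.
Lemma u3_step k : u3 N k <= f3 N (S k) - f3 N k.
Proof. unfold u3, f3. rewrite S_INR. pose proof (pos_INR k).
  replace (- / (N + (INR k + 1) - / 2) - - / (N + INR k - / 2)) with (/ ((N + INR k - /2) * (N + INR k + /2))) by (field; lra).
  apply Rinv_le_contravar. apply Rmult_lt_0_compat; lra. nra. Qed.
Lemma f3_D k : f3 N k <= f3 N 0%nat + / (N - /2).
Proof. unfold f3. simpl. pose proof (pos_INR k).
  assert (0 < / (N + INR k - /2)) by (apply Rinv_0_lt_compat; lra).
  replace (N + 0 - /2) with (N - /2) by ring. lra. Qed.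
End P3.

Lemma absr z : Rabs (IZR z) = INR (Z.abs_nat z).
Proof. rewrite <- abs_IZR, INR_IZR_INZ, Nat2Z.inj_abs_nat. reflexivity. Qed.

Lemma absr_ge1 z : z <> 0%Z -> 1 <= INR (Z.abs_nat z).
Proof.
  intros Hz. replace 1 with (INR 1) by reflexivity. apply le_INR.
  assert (Z.of_nat (Z.abs_nat z) <> 0%Z) by (rewrite Nat2Z.inj_abs_nat; lia). lia.
Qed.

Lemma q_zero gamma : q_kernel gamma 0 = 0.
Proof. unfold q_kernel. destruct (Z.eq_dec 0 0); [reflexivity|congruence]. Qed.

Lemma q_bounds gamma z : 2 <= gamma -> z <> 0%Z ->
  0 <= q_kernel gamma z <= / (INR (Z.abs_nat z))^3.
Proof.
  intros hg Hz. unfold q_kernel. destruct (Z.eq_dec z 0); [contradiction|].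
  rewrite absr. pose proof (absr_ge1 z Hz). set (r := INR (Z.abs_nat z)) in *.
  split.
  - unfold Rpower. apply Rlt_le, exp_pos.
  - eapply Rle_trans. apply (Rle_Rpower r (- gamma - 1) (- (INR 3))); [lra| simpl; lra].
    rewrite Rpower_Ropp, Rpower_pow by lra. lra.
Qed.

Lemma pow4_abs a : a ^ 4 = (Rabs a) ^ 4.
Proof. unfold Rabs; destruct Rcase_abs; ring. Qed.
Lemma pow2_abs' a : a ^ 2 = (Rabs a) ^ 2.
Proof. unfold Rabs; destruct Rcase_abs; ring. Qed.

Lemma c_nonneg gamma : 2 <= gamma -> 0 <= c_gamma gamma.
Proof.
  intros hg.
  destruct (zsum_bound (q_kernel gamma) u1 f1 2 4 0 u1_pos u1_dec u1_step f1_D) as [H1 _].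
  - lra.
  - intros y. rewrite Z.sub_0_r. destruct (Z.eq_dec y 0) as [->|Hy].
    + rewrite q_zero. pose proof (u1_pos (Z.abs_nat 0)). lra.
    + destruct (q_bounds gamma y hg Hy) as [Hq1 Hq2]. split; auto.
      pose proof (absr_ge1 y Hy). unfold u1. set (r := INR (Z.abs_nat y)) in *.
      eapply Rle_trans; [exact Hq2|].
      apply (Rmult_le_reg_r (r^3 * (1 + r)^2)). 
      { apply Rmult_lt_0_compat; apply pow_lt; lra. }
      replace (/ r ^ 3 * (r ^ 3 * (1 + r) ^ 2)) with ((1+r)^2) by (field; lra).
      replace (4 * / (1 + r) ^ 2 * (r ^ 3 * (1 + r) ^ 2)) with (4 * r^3) by (field; lra).
      nra.
  - unfold c_gamma. destruct (Req_dec (zsum (q_kernel gamma)) 0) as [E|E].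
    + rewrite E, Rinv_0; lra.
    + apply Rlt_le, Rinv_0_lt_compat. lra.
Qed.

Lemma p_bounds gamma z : 2 <= gamma -> z <> 0%Z ->
  0 <= p_kernel gamma z <= c_gamma gamma / (INR (Z.abs_nat z))^3.
Proof.
  intros hg Hz. unfold p_kernel. pose proof (c_nonneg gamma hg).
  destruct (q_bounds gamma z hg Hz). split.
  - apply Rmult_le_pos; auto.
  - unfold Rdiv. apply Rmult_le_compat_l; auto.
Qed.

Section Main.
Variables (gamma : R) (G : R -> R) (K N : R).
Hypothesis hg : 2 <= gamma.
Hypothesis HK : 0 < K.
Hypothesis HG : forall t, (1 + Rabs t) * Rabs (G t) <= K.
Hypothesis Hex : forall t, ex_derive G t.
Hypothesis HG' : forall t, (1 + Rabs t) * Rabs (Derive G t) <= K.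
Hypothesis HN : 4 <= N.

Let c := c_gamma gamma.
Definition ee (x : Z) := N / (N + Rabs (IZR x)).

Lemma ee_range x : 0 <= ee x <= 1.
Proof. unfold ee. pose proof (Rabs_pos (IZR x)). split.
  - apply Rlt_le, Rdiv_lt_0_compat; lra.
  - apply (Rmult_le_reg_r (N + Rabs (IZR x))); [lra|]. field_simplify; lra. Qed.

Lemma dG_main x y : Rabs (G (IZR y / N) - G (IZR x / N)) <= 3 * K * ee x * INR (Z.abs_nat (y - x)) / N.
Proof.
  pose proof (dG_env G K HK HG Hex HG' (IZR x / N) (IZR y / N)) as H.
  replace (IZR y / N - IZR x / N) with (IZR (y - x) / N) in H by (rewrite minus_IZR; field; lra).
  rewrite !Rabs_div, !(Rabs_right N), (absr (y - x)) in H by lra.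
  unfold ee. pose proof (Rabs_pos (IZR x)).
  set (d := Rabs (G (IZR y / N) - G (IZR x / N))) in *.
  set (a := Rabs (IZR x)) in *. set (r := INR (Z.abs_nat (y - x))) in *.
  apply (Rmult_le_reg_l ((N + a) / N)). apply Rdiv_lt_0_compat; lra.
  replace ((N + a) / N * (3 * K * (N / (N + a)) * r / N)) with (3 * K * (r / N)) by (field; lra).
  replace ((N + a) / N) with (1 + a / N) by (field; lra). exact H.
Qed.

Definition inner1 (x : Z) := zsum (fun y =>
        (G (IZR y / N) - G (IZR x / N)) ^ 4 * (p_kernel gamma (y - x)) ^ 2).
Definition inner2 (x : Z) := zsum (fun y =>
        p_kernel gamma (y - x) * (G (IZR y / N) - G (IZR x / N)) ^ 2).

Lemma inner1_bd x : 0 <= inner1 x /\ inner1 x <= 1296 * c^2 * K^4 / N^2 * u3 N (Z.abs_nat (x - 0)).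
Proof.
  pose proof (c_nonneg gamma hg) as Hc. fold c in Hc.
  pose proof (ee_range x) as He.
  destruct (zsum_bound (fun y => (G (IZR y / N) - G (IZR x / N)) ^ 4 * (p_kernel gamma (y - x)) ^ 2)
     u1 f1 2 (324*c^2*K^4*ee x^2/N^4) x u1_pos u1_dec u1_step f1_D) as [H1 H2].
  - clear -He Hc HK HN. generalize (ee x) He; intros e He'.
    unfold Rdiv. apply Rmult_le_pos; [|apply Rlt_le, Rinv_0_lt_compat, pow_lt; lra].
    repeat apply Rmult_le_pos; try lra; apply pow_le; lra.
  - intros y. split.
    + apply Rmult_le_pos; [rewrite pow4_abs; apply pow_le, Rabs_pos | apply pow2_ge_0].
    + destruct (Z.eq_dec (y - x) 0) as [E|E].
      * rewrite E. unfold p_kernel. rewrite q_zero, Rmult_0_r. replace (0 ^ 2) with 0 by ring. rewrite Rmult_0_r.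
        apply Rmult_le_pos; [|apply u1_pos].
        clear -He Hc HK HN. generalize (ee x) He; intros e He'.
        unfold Rdiv. apply Rmult_le_pos; [|apply Rlt_le, Rinv_0_lt_compat, pow_lt; lra].
        repeat apply Rmult_le_pos; try lra; apply pow_le; lra.
      * rewrite pow4_abs. destruct (p_bounds gamma (y - x) hg E). fold c in H0.
        apply ineq1; auto; try lra. apply Rabs_pos. apply dG_main. apply absr_ge1; auto.
  - fold (inner1 x) in H1, H2. split; auto. eapply Rle_trans; [exact H2|].
    rewrite Z.sub_0_r. unfold u3, ee. rewrite absr.
    pose proof (pos_INR (Z.abs_nat x)). set (a := INR (Z.abs_nat x)) in *.
    apply Req_le. field. lra.
Qed.

Lemma inner2_bd x : 0 <= inner2 x /\ inner2 x <= 240 * c * K^2 * ln N / N^2 * ee x.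
Proof.
  pose proof (c_nonneg gamma hg) as Hc. fold c in Hc.
  pose proof (ee_range x) as He.
  destruct (zsum_bound (fun y => p_kernel gamma (y - x) * (G (IZR y / N) - G (IZR x / N)) ^ 2)
     (u2 N) (f2 N) (4 / N * ln N) (30*c*K^2*ee x/N) x (u2_pos N ltac:(lra)) (u2_dec N ltac:(lra))
     (u2_step N HN) (f2_D N ltac:(lra))) as [H1 H2].
  - clear -He Hc HK HN. generalize (ee x) He; intros e He'.
    unfold Rdiv. apply Rmult_le_pos; [|apply Rlt_le, Rinv_0_lt_compat; lra].
    repeat apply Rmult_le_pos; try lra; apply pow_le; lra.
  - intros y. split.
    + destruct (Z.eq_dec (y - x) 0) as [E|E].
      * rewrite E. unfold p_kernel. rewrite q_zero, Rmult_0_r, Rmult_0_l. lra.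
      * apply Rmult_le_pos. apply (p_bounds gamma (y - x) hg E). rewrite pow2_abs'. apply pow_le, Rabs_pos.
    + destruct (Z.eq_dec (y - x) 0) as [E|E].
      * rewrite E. unfold p_kernel. rewrite q_zero, Rmult_0_r, Rmult_0_l.
        apply Rmult_le_pos; [|apply (u2_pos N ltac:(lra))].
        clear -He Hc HK HN. generalize (ee x) He; intros e He'.
        unfold Rdiv. apply Rmult_le_pos; [|apply Rlt_le, Rinv_0_lt_compat; lra].
        repeat apply Rmult_le_pos; try lra; apply pow_le; lra.
      * rewrite pow2_abs'. destruct (p_bounds gamma (y - x) hg E). fold c in H0.
        unfold u2. apply ineq2; auto; try lra. apply Rabs_pos. apply dG_main.
        apply dG_sup; auto. apply absr_ge1; auto.
  - fold (inner2 x) in H1, H2. split; auto. eapply Rle_trans; [exact H2|].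
    apply Req_le. field. lra.
Qed.

Lemma T1_bd : 0 <= zsum inner1 <= 1296 * c^2 * K^4 / N^2 * (2 * / (N - /2)).
Proof.
  pose proof (c_nonneg gamma hg) as Hc. fold c in Hc.
  apply (zsum_bound inner1 (u3 N) (f3 N) (/ (N - /2)) _ 0 (u3_pos N ltac:(lra)) (u3_dec N ltac:(lra))
     (u3_step N ltac:(lra)) (f3_D N ltac:(lra))).
  - unfold Rdiv. apply Rmult_le_pos; [|apply Rlt_le, Rinv_0_lt_compat, pow_lt; lra].
    repeat apply Rmult_le_pos; try lra; apply pow_le; lra.
  - apply inner1_bd.
Qed.

Lemma T2_bd : 0 <= zsum (fun x => (inner2 x)^2) <= (240 * c * K^2 * ln N)^2 / N^2 * (2 * / (N - /2)).
Proof.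
  apply (zsum_bound _ (u3 N) (f3 N) (/ (N - /2)) _ 0 (u3_pos N ltac:(lra)) (u3_dec N ltac:(lra))
     (u3_step N ltac:(lra)) (f3_D N ltac:(lra))).
  - unfold Rdiv. apply Rmult_le_pos; [apply pow2_ge_0|apply Rlt_le, Rinv_0_lt_compat, pow_lt; lra].
  - intros x. destruct (inner2_bd x) as [H1 H2]. split; [apply pow2_ge_0|].
    pose proof (ee_range x).
    assert (0 <= 240 * c * K^2 * ln N / N^2 * ee x) by lra.
    eapply Rle_trans. apply pow_incr. split; [exact H1| exact H2].
    rewrite Z.sub_0_r. unfold u3, ee. rewrite absr.
    pose proof (pos_INR (Z.abs_nat x)). set (a := INR (Z.abs_nat x)) in *.
    apply Req_le. field. lra.
Qed.
End Main.

Lemma lim_aux : is_lim_seq (fun n => ln (sqrt (INR n)) / sqrt (INR n)) 0.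
Proof.
  apply (is_lim_comp_seq (fun y => ln y / y) (fun n => sqrt (INR n)) p_infty 0).
  - apply is_lim_div_ln_p.
  - exists 0%nat. intros n _. discriminate.
  - apply (is_lim_comp_seq sqrt INR p_infty p_infty).
    + apply (is_lim_sqrt_p (fun y => y)). apply is_lim_id.
    + exists 0%nat. intros n _. discriminate.
    + apply is_lim_seq_INR.
Qed.

Theorem propositionA6 (gamma : R) (hgamma : 2 <= gamma) (G : R -> R)
  (hG : schwartz G) :
  is_lim_seq (fun n : nat => A6_expr gamma G n) 0.
Proof.
  destruct (env G hG) as [K [HK [HG [Hex HG']]]].
  set (c := c_gamma gamma).
  set (a := 1296 * c^2 * K^4). set (b := (240 * c * K^2)^2).
  assert (Ha : 0 <= a).
  { unfold a. pose proof (pow2_ge_0 c). assert (0 <= K^4) by (apply pow_le; lra). nra. }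
  assert (Hb : 0 <= b) by (unfold b; apply pow2_ge_0).
  apply is_lim_seq_le_le_loc with (u := fun _ => 0)
    (w := fun n => 4 * a * / INR n + 16 * b * ((ln (sqrt (INR n)) / sqrt (INR n)) * (ln (sqrt (INR n)) / sqrt (INR n)))).
  - exists 4%nat. intros n Hn.
    assert (HN : 4 <= INR n) by (replace 4 with (INR 4) by (simpl; ring); apply le_INR; lia).
    set (N := INR n) in *.
    pose proof (T1_bd gamma G K N hgamma HK HG Hex HG' HN) as [T1a T1b].
    pose proof (T2_bd gamma G K N hgamma HK HG Hex HG' HN) as [T2a T2b].
    unfold inner1 in T1a, T1b. unfold inner2 in T2a, T2b.
    fold c in T1b, T2b. fold a in T1b.
    unfold A6_expr. cbv zeta. fold N.
    set (T1 := zsum (fun x => zsum (fun y =>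
        (G (IZR y / N) - G (IZR x / N)) ^ 4 * (p_kernel gamma (y - x)) ^ 2))) in *.
    set (T2 := zsum (fun x => (zsum (fun y =>
        p_kernel gamma (y - x) * (G (IZR y / N) - G (IZR x / N)) ^ 2)) ^ 2)) in *.
    replace ((240 * c * K ^ 2 * ln N) ^ 2) with (b * (ln N)^2) in T2b by (unfold b; ring).
    assert (HTh : 0 <= Theta gamma n ^ 2 / N ^ 2 <= N^2).
    { unfold Theta. fold N. destruct (Rgt_dec gamma 2).
      - split. apply Rmult_le_pos; [apply pow2_ge_0| apply Rlt_le, Rinv_0_lt_compat, pow_lt; lra].
        apply Req_le. field. lra.
      - assert (Hl : 1 <= ln N).
        { rewrite <- ln_exp with 1. apply ln_le. apply exp_pos. pose proof exp_le_3. lra. }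
        split. apply Rmult_le_pos; [apply pow2_ge_0| apply Rlt_le, Rinv_0_lt_compat, pow_lt; lra].
        replace ((N ^ 2 / ln N) ^ 2 / N ^ 2) with (N^2 / (ln N)^2) by (field; lra).
        apply (Rmult_le_reg_r ((ln N)^2)). apply pow_lt; lra.
        replace (N ^ 2 / ln N ^ 2 * ln N ^ 2) with (N^2) by (field; lra).
        assert (1 <= (ln N)^2) by nra. assert (0 <= N^2) by apply pow2_ge_0. nra. }
    split.
    + apply Rmult_le_pos; lra.
    + assert (Hs : sqrt N * sqrt N = N) by (apply sqrt_sqrt; lra).
      assert (Hsp : 0 < sqrt N) by (apply sqrt_lt_R0; lra).
      assert (Hln : ln N = 2 * ln (sqrt N)) by (rewrite <- Hs at 1; rewrite ln_mult by lra; ring).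
      assert (Hgoal : 4 * a * / N + 16 * b * (ln (sqrt N) / sqrt N * (ln (sqrt N) / sqrt N))
                 = 4 * (a + b * (ln N)^2) / N).
      { rewrite Hln. clearbody N. set (s := sqrt N) in *. clearbody s. set (l := ln s). subst N. field. lra. }
      rewrite Hgoal.
      assert (HT : T1 + T2 <= (a + b * (ln N)^2) / N^2 * (2 * / (N - /2))).
      { replace ((a + b * (ln N)^2) / N^2 * (2 * / (N - /2))) with
          (a / N^2 * (2 * / (N - /2)) + b * (ln N)^2 / N^2 * (2 * / (N - /2))) by (field; lra).
        lra. }
      assert (0 <= T1 + T2) by lra.
      eapply Rle_trans. apply Rmult_le_compat; [apply HTh| exact H | apply HTh | exact HT].
      assert (0 <= a + b * (ln N)^2) by (pose proof (pow2_ge_0 (ln N)); nra).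
      replace (N ^ 2 * ((a + b * ln N ^ 2) / N ^ 2 * (2 * / (N - / 2)))) with
        (2 * (a + b * (ln N)^2) / (N - /2)) by (field; lra).
      apply (Rmult_le_reg_r (N * (N - /2))). apply Rmult_lt_0_compat; lra.
      replace (2 * (a + b * ln N ^ 2) / (N - / 2) * (N * (N - / 2))) with (2 * (a + b * (ln N)^2) * N) by (field; lra).
      replace (4 * (a + b * ln N ^ 2) / N * (N * (N - / 2))) with (4 * (a + b * (ln N)^2) * (N - /2)) by (field; lra).
      nra.
  - apply is_lim_seq_const.
  - replace (Finite 0) with (Finite (4 * a * 0 + 16 * b * (0 * 0))) by (f_equal; ring).
    apply is_lim_seq_plus'.
    + apply is_lim_seq_mult'. apply is_lim_seq_const.
      pose proof (is_lim_seq_inv INR p_infty is_lim_seq_INR ltac:(discriminate)). exact H.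
    + apply is_lim_seq_mult'. apply is_lim_seq_const.
      apply is_lim_seq_mult'; apply lim_aux.
Qed.
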